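(* Assume Assumption A. Then the family of conductance sequences $(c_N(\eta,\xi))_{N\ge1}$, $(\eta,\xi)\in\mathbb B$, where $c_N(\eta,\xi)=\mu_N(\eta)R_N(\eta,\xi)$, is ordered.
   Context: Setting: $E$ is a fixed finite set; for each $N\ge1$, $(\eta^N_t)$ is a continuous-time irreducible Markov chain on $E$ with jump rates $R_N(\eta,\xi)$ and unique invariant probability measure $\mu_N$. Ordered families: a finite family of sequences of positive reals $(a^r_N)_{N\ge1}$, $r\in\mathfrak R$, is ordered if for all $r\neq s$ the sequence $\arctan(a^r_N/a^s_N)$ converges as $N\to\infty$. Assumption A: (i) for each $\eta\neq\xi$, either $R_N(\eta,\xi)=0$ for all $N$ or $R_N(\eta,\xi)>0$ for all $N$; let $\mathbb B=\{(\eta,\xi):\eta\ne\xi,R_N(\eta,\xi)>0\}$. (ii) For every $m\ge1$ the family $\prod_{(\eta,\xi)\in\mathbb B}R_N(\eta,\xi)^{k(\eta,\xi)}$, indexed by $k:\mathbb B\to\mathbb Z_+$ with $\sum k=m$, is ordered. *)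

(* Defs.v *)
From Stdlib Require Import Reals Relations.
From mathcomp Require Import all_boot.
Set Implicit Arguments. Unset Strict Implicit. Unset Printing Implicit Defensive.
Local Open Scope R_scope.

Definition ordered {I : Type} (P : I -> Prop) (a : I -> nat -> R) : Prop :=
  (forall r, P r -> forall N : nat, (0 < N)%N -> 0 < a r N) /\
  (forall r s, P r -> P s -> r <> s ->
     exists l : R, Un_cv (fun N => atan (a r N / a s N)) l).

Definition edge {E : finType} (Rt : nat -> E -> E -> R) (N : nat) (x y : E) : Prop :=
  x <> y /\ 0 < Rt N x y.

Definition irreducible {E : finType} (Rt : nat -> E -> E -> R) (N : nat) : Prop :=
  forall x y : E, clos_refl_trans E (edge Rt N) x y.

Definition invariant_prob {E : finType} (Rt : nat -> E -> E -> R) (N : nat)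
  (mu : E -> R) : Prop :=
  (forall x, 0 <= mu x) /\
  \big[Rplus/0]_(x : E) mu x = 1 /\
  (forall y : E,
     \big[Rplus/0]_(x : E | x != y) (mu x * Rt N x y)
     = mu y * \big[Rplus/0]_(z : E | z != y) Rt N y z).

(* the edge set B (N-independent under Assumption A(i); read off at N = 1) *)
Definition inB {E : finType} (Rt : nat -> E -> E -> R) (p : E * E) : bool :=
  (p.1 != p.2) && (if Rlt_dec 0 (Rt 1%nat p.1 p.2) then true else false).

Definition monomial {E : finType} (Rt : nat -> E -> E -> R) (k : E * E -> nat)
  (N : nat) : R :=
  \big[Rmult/1]_(p : E * E | inB Rt p) (Rt N p.1 p.2 ^ k p).

(* Main.v *)
From HB Require Import structures.
Require Import Defs.
From Stdlib Require Import Reals Relations Lra Lia Classical.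
From Stdlib Require List.
From mathcomp Require Import all_boot zify.
Set Implicit Arguments. Unset Strict Implicit. Unset Printing Implicit Defensive.
Local Open Scope R_scope.

Lemma Rplus_assoc' : associative Rplus. Proof. by move=> *; rewrite Rplus_assoc. Qed.
Lemma Rmult_assoc' : associative Rmult. Proof. by move=> *; rewrite Rmult_assoc. Qed.
HB.instance Definition _ := Monoid.isComLaw.Build R 0 Rplus Rplus_assoc' Rplus_comm Rplus_0_l.
HB.instance Definition _ := Monoid.isComLaw.Build R 1 Rmult Rmult_assoc' Rmult_comm Rmult_1_l.
HB.instance Definition _ := Monoid.isMulLaw.Build R 0 Rmult Rmult_0_l Rmult_0_r.
HB.instance Definition _ := Monoid.isAddLaw.Build R Rmult Rplus Rmult_plus_distr_r Rmult_plus_distr_l.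

Lemma cv_ext_ev (u v : nat -> R) l :
  (forall n, (0 < n)%N -> u n = v n) -> Un_cv u l -> Un_cv v l.
Proof.
move=> H Hu eps Heps; case: (Hu eps Heps) => N0 HN0; exists (N0.+1) => n Hn.
rewrite -H; first by apply HN0; lia.
apply/ltP; lia.
Qed.

Lemma cv_const c : Un_cv (fun _ => c) c.
Proof.
move=> eps Heps; exists 0%nat => n _; rewrite /R_dist Rminus_diag Rabs_R0; lra.
Qed.

Lemma lim_ge (u : nat -> R) a l :
  (forall n, (0 < n)%N -> a <= u n) -> Un_cv u l -> a <= l.
Proof.
move=> H Hu; case: (Rle_lt_dec a l) => // Hl; exfalso.
have He : a - l > 0 by lra.
case: (Hu _ He) => N0 HN0.
have := HN0 (N0.+1) ltac:(lia); rewrite /R_dist => /Rabs_def2 [H1 H2].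
have := H (N0.+1) isT; lra.
Qed.

Lemma lim_le (u : nat -> R) a l :
  (forall n, (0 < n)%N -> u n <= a) -> Un_cv u l -> l <= a.
Proof.
move=> H Hu; case: (Rle_lt_dec l a) => // Hl; exfalso.
have He : l - a > 0 by lra.
case: (Hu _ He) => N0 HN0.
have := HN0 (N0.+1) ltac:(lia); rewrite /R_dist => /Rabs_def2 [H1 H2].
have := H (N0.+1) isT; lra.
Qed.

Lemma cv_inv (b : nat -> R) l : Un_cv b l -> l <> 0 -> Un_cv (fun n => / b n) (/ l).
Proof.
move=> Hb Hl.
have Hc : continuity_pt (/ Ranalysis1.id)%F l.
  apply: continuity_pt_inv => //; apply: derivable_continuous_pt; apply: derivable_pt_id.
exact: (continuity_seq _ _ _ Hc Hb).
Qed.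

Lemma cv_atan (b : nat -> R) l : Un_cv b l -> Un_cv (fun n => atan (b n)) (atan l).
Proof.
move=> Hb; apply: continuity_seq => //.
apply: derivable_continuous_pt; apply: derivable_pt_atan.
Qed.

Lemma atan_tan_cv (r : nat -> R) l :
  Un_cv (fun n => atan (r n)) l -> - (PI/2) < l < PI/2 -> Un_cv r (tan l).
Proof.
move=> Hr [H1 H2].
have Hc : continuity_pt tan l.
  apply: (continuity_pt_div sin cos l).
  - by apply: continuity_sin.
  - by apply: continuity_cos.
  - by have := cos_gt_0 _ H1 H2; lra.
have := continuity_seq _ _ _ Hc Hr.
apply: cv_ext_ev => n _; by rewrite tan_atan.
Qed.

Definition pos (u : nat -> R) := forall n, (0 < n)%N -> 0 < u n.
Definition dom (u v : nat -> R) := exists c, Un_cv (fun n => u n / v n) c.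

Lemma dom_total u v : pos u -> pos v ->
  (exists l, Un_cv (fun n => atan (u n / v n)) l) -> dom u v \/ dom v u.
Proof.
move=> Hu Hv [l Hl].
have l0 : 0 <= l.
  apply: (lim_ge _ Hl) => n Hn; rewrite -atan_0; left; apply: atan_increasing.
  apply: Rdiv_lt_0_compat; [exact: Hu | exact: Hv].
have l1 : l <= PI/2.
  apply: (lim_le _ Hl) => n Hn; have := atan_bound (u n / v n); lra.
have P2 := PI2_RGT_0.
case: (Rlt_le_dec l (PI/2)) => Hlt.
  left; exists (tan l); apply: atan_tan_cv Hl _; lra.
right; exists (tan (PI/2 - l)); apply: atan_tan_cv; last by lra.
have := CV_minus _ _ _ _ (cv_const (PI/2)) Hl.
apply: cv_ext_ev => n Hn /=.
have Hun := Hu n Hn; have Hvn := Hv n Hn.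
have -> : v n / u n = / (u n / v n) by field; lra.
rewrite atan_inv //; apply: Rdiv_lt_0_compat => //.
Qed.

Lemma dom_refl u : pos u -> dom u u.
Proof.
move=> Hu; exists 1; apply: cv_ext_ev (cv_const 1) => n Hn.
have := Hu n Hn => H; field; lra.
Qed.

Lemma dom_trans u v w : pos v -> pos w -> dom u v -> dom v w -> dom u w.
Proof.
move=> Hv Hw [c1 H1] [c2 H2]; exists (c1 * c2).
apply: cv_ext_ev (CV_mult _ _ _ _ H1 H2) => n Hn.
have := Hv n Hn; have := Hw n Hn => *; field; lra.
Qed.

Lemma dom_max (S : seq (nat -> R)) :
  (forall u, List.In u S -> pos u) ->
  (forall u v, List.In u S -> List.In v S -> dom u v \/ dom v u) ->
  forall l, (forall u, List.In u l -> List.In u S) -> l <> nil ->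
  exists m, List.In m l /\ forall u, List.In u l -> dom u m.
Proof.
move=> Hpos Htot; elim=> [|a l IH] // Hsub _.
have Ha : List.In a S by apply: Hsub; left.
case: l IH Hsub => [|b l] IH Hsub.
  exists a; split; first by left.
  by move=> u [<-|[]]; apply: dom_refl; apply: Hpos.
case: IH => // [u Hu|m [Hm Hmax]].
  by apply: Hsub; right.
have HmS : List.In m S by apply: Hsub; right.
case: (Htot a m Ha HmS) => Ham.
  exists m; split; first by right.
  by move=> u [<-|Hu] //; apply: Hmax.
exists a; split; first by left.
move=> u [<-|Hu]; first by apply: dom_refl; apply: Hpos.
apply: (@dom_trans _ m) => //; try apply: Hpos => //.
by apply: Hmax.
Qed.

Lemma sum_ratio_cv (w : nat -> R) (l : seq (nat -> R)) :
  (forall u, List.In u l -> dom u w) ->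
  exists C, Un_cv (fun n => (\big[Rplus/0]_(u <- l) u n) / w n) C.
Proof.
elim: l => [|a l IH] H.
  exists 0; apply: cv_ext_ev (cv_const 0) => n _; rewrite big_nil /Rdiv Rmult_0_l //.
case: IH => [u Hu|C HC]; first by apply: H; right.
case: (H a) => [|c Hc]; first by left.
exists (c + C); apply: cv_ext_ev (CV_plus _ _ _ _ Hc HC) => n _.
by rewrite big_cons Rdiv_plus_distr.
Qed.

Lemma sum_pos (l : seq (nat -> R)) n : (0 < n)%N -> l <> nil ->
  (forall u, List.In u l -> pos u) -> 0 < \big[Rplus/0]_(u <- l) u n.
Proof.
move=> Hn; elim: l => [|a l IH] // _ H; rewrite big_cons.
have Ha : 0 < a n by apply: H => //; left.
case: l IH H => [|b l] IH H; first by rewrite big_nil; lra.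
have := IH ltac:(done) (fun u Hu => H u (or_intror Hu)); lra.
Qed.

Lemma sum_nneg (l : seq (nat -> R)) n : (0 < n)%N ->
  (forall u, List.In u l -> pos u) -> 0 <= \big[Rplus/0]_(u <- l) u n.
Proof.
move=> Hn; elim: l => [|a l IH] H; first by rewrite big_nil; lra.
rewrite big_cons; have Ha : 0 < a n by apply: H => //; left.
have := IH (fun u Hu => H u (or_intror Hu)); lra.
Qed.

Lemma sum_ge (l : seq (nat -> R)) m n : (0 < n)%N -> List.In m l ->
  (forall u, List.In u l -> pos u) -> m n <= \big[Rplus/0]_(u <- l) u n.
Proof.
move=> Hn; elim: l => [|a l IH] // Hm H; rewrite big_cons.
have Ha : 0 < a n by apply: H => //; left.
have Hs := sum_nneg Hn (fun u Hu => H u (or_intror Hu)).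
case: Hm => [<-|Hm]; first by lra.
have := IH Hm (fun u Hu => H u (or_intror Hu)); lra.
Qed.

Lemma quot_atan_cv (A B m : nat -> R) a b : pos A -> pos B -> pos m ->
  Un_cv (fun n => A n / m n) a -> Un_cv (fun n => B n / m n) b -> 0 < b ->
  Un_cv (fun n => atan (A n / B n)) (atan (a / b)).
Proof.
move=> HA HB Hm Ha Hb Hb0.
have := cv_atan (CV_mult _ _ _ _ Ha (cv_inv Hb ltac:(lra))).
apply: cv_ext_ev => n Hn; congr atan.
have := HA n Hn; have := HB n Hn; have := Hm n Hn => *; field; lra.
Qed.

Lemma ratio_cv (la lb : seq (nat -> R)) : la <> nil -> lb <> nil ->
  (forall u, List.In u (la ++ lb) -> pos u) ->
  (forall u v, List.In u (la ++ lb) -> List.In v (la ++ lb) ->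
     exists l, Un_cv (fun n => atan (u n / v n)) l) ->
  exists l, Un_cv (fun n => atan ((\big[Rplus/0]_(u <- la) u n) /
                                   (\big[Rplus/0]_(u <- lb) u n))) l.
Proof.
move=> Hla Hlb Hpos Hcmp.
have Htot : forall u v, List.In u (la ++ lb) -> List.In v (la ++ lb) ->
    dom u v \/ dom v u.
  move=> u v Hu Hv; apply: dom_total; [exact: Hpos|exact: Hpos|exact: Hcmp].
case: (dom_max Hpos Htot (l:=la ++ lb)) => //.
  by clear -Hla; case: la Hla.
move=> m [Hm Hmax].
have Hmp : pos m by apply: Hpos.
case: (@sum_ratio_cv m la) => [u Hu|a Ha].
  by apply: Hmax; apply: List.in_or_app; left.
case: (@sum_ratio_cv m lb) => [u Hu|b Hb].
  by apply: Hmax; apply: List.in_or_app; right.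
have HposA : forall u, List.In u la -> pos u.
  by move=> u Hu; apply: Hpos; apply: List.in_or_app; left.
have HposB : forall u, List.In u lb -> pos u.
  by move=> u Hu; apply: Hpos; apply: List.in_or_app; right.
pose A n := \big[Rplus/0]_(u <- la) u n.
pose B n := \big[Rplus/0]_(u <- lb) u n.
have PA : pos A by move=> n Hn; apply: sum_pos.
have PB : pos B by move=> n Hn; apply: sum_pos.
have bge : 0 <= b.
  apply: (lim_ge _ Hb) => n Hn; left; apply: Rdiv_lt_0_compat; [exact: PB|exact: Hmp].
have age : 0 <= a.
  apply: (lim_ge _ Ha) => n Hn; left; apply: Rdiv_lt_0_compat; [exact: PA|exact: Hmp].
have ge1 : forall l, List.In m l -> (forall u, List.In u l -> pos u) ->
    forall c, Un_cv (fun n => (\big[Rplus/0]_(u <- l) u n) / m n) c -> 1 <= c.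
  move=> l Hml Hl c Hc; apply: (lim_ge _ Hc) => n Hn.
  have := sum_ge Hn Hml Hl; have := Hmp n Hn => *.
  apply: (Rmult_le_reg_r (m n)) => //.
  rewrite /Rdiv Rmult_assoc Rinv_l; lra.
case: (Rlt_le_dec 0 b) => Hb0.
  by exists (atan (a / b)); apply: (quot_atan_cv PA PB Hmp Ha Hb Hb0).
have Ha0 : 0 < a.
  case: (List.in_app_or _ _ _ Hm) => Hm'.
    by have := ge1 _ Hm' HposA _ Ha; lra.
  by have := ge1 _ Hm' HposB _ Hb; lra.
exists (PI/2 - atan (b / a)).
have := CV_minus _ _ _ _ (cv_const (PI/2)) (quot_atan_cv PB PA Hmp Hb Ha Ha0).
apply: cv_ext_ev => n Hn /=.
have HAn := PA n Hn; have HBn := PB n Hn.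
rewrite -/(A n) -/(B n).
have -> : A n / B n = / (B n / A n) by field; lra.
rewrite atan_inv //; apply: Rdiv_lt_0_compat => //.
Qed.

Definition upd {E : finType} (f : {ffun E -> E}) (a b : E) : {ffun E -> E} :=
  [ffun v => if v == a then b else f v].

Lemma updE {E : finType} (f : {ffun E -> E}) a b v :
  upd f a b v = if v == a then b else f v.
Proof. by rewrite /upd ffunE. Qed.

Lemma reachP {E : finType} (f : E -> E) u x :
  fconnect f u x <-> exists k, iter k f u = x.
Proof.
split; first by move=> H; exists (findex f u x); apply: iter_findex.
by case=> k <-; apply: fconnect_iter.
Qed.

Lemma reach_upd {E : finType} (f f' : E -> E) y u :
  (forall v, v != y -> f' v = f v) ->
  (exists k, iter k f u = y) -> exists k, iter k f' u = y.
Proof.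
move=> H [k]; elim: k u => [|k IH] u; first by move=> Hk; exists 0%nat.
rewrite iterSr => Hk; case: (eqVneq u y) => [->|Hne]; first by exists 0%nat.
case: (IH _ Hk) => j Hj; exists j.+1; by rewrite iterSr H.
Qed.

Lemma cycle_uniq (T : Type) (g : T -> T) y a b :
  iter a.+1 g y = y -> iter b.+1 g y = y -> iter a g y = iter b g y.
Proof.
suff: forall n a b, (a + b <= n)%N ->
   iter a.+1 g y = y -> iter b.+1 g y = y -> iter a g y = iter b g y.
  by move=> H; apply: (H (a + b)%N).
elim=> [|n IH] {}a {}b Hn Ha Hb.
  have -> : a = 0%nat by lia.
  by have -> : b = 0%nat by lia.
case: (ltngtP a b) => Hab; last by rewrite Hab.
- have [c Ec] : exists c, b = (c + a.+1)%N by exists (b - a.+1)%N; lia.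
  subst b; rewrite iterD Ha; rewrite -addSn iterD Ha in Hb.
  apply: (IH a c) => //; lia.
- have [c Ec] : exists c, a = (c + b.+1)%N by exists (a - b.+1)%N; lia.
  subst a; rewrite iterD Hb; rewrite -addSn iterD Hb in Ha.
  apply: (IH c b) => //; lia.
Qed.

Definition tree {E : finType} (Rt : nat -> E -> E -> R) (x : E) (f : {ffun E -> E}) : bool :=
  [&& f x == x, [forall u, (u != x) ==> inB Rt (u, f u)] & [forall u, fconnect f u x]].
Definition Gset {E : finType} (Rt : nat -> E -> E -> R) (y : E) (g : {ffun E -> E}) : bool :=
  [forall u, inB Rt (u, g u)] && [forall u, fconnect g u y].
Definition ygf {E : finType} (g : {ffun E -> E}) (y : E) : E :=
  odflt y [pick u | (g u == y) && fconnect g y u].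

Lemma inB_neq {E : finType} (Rt : nat -> E -> E -> R) u v : inB Rt (u, v) -> u != v.
Proof. by case/andP. Qed.

Lemma treeP {E : finType} (Rt : nat -> E -> E -> R) x f :
  tree Rt x f <-> [/\ f x = x, (forall u, u != x -> inB Rt (u, f u)) &
                     (forall u, exists k, iter k f u = x)].
Proof.
split.
  case/and3P => /eqP H1 /forallP H2 /forallP H3; split => //.
  - by move=> u Hu; have := H2 u; rewrite Hu.
  - by move=> u; apply/reachP.
case=> H1 H2 H3; apply/and3P; split; first by apply/eqP.
- by apply/forallP => u; apply/implyP; apply: H2.
- by apply/forallP => u; apply/reachP.
Qed.

Lemma GsetP {E : finType} (Rt : nat -> E -> E -> R) y g :
  Gset Rt y g <-> (forall u, inB Rt (u, g u)) /\ (forall u, exists k, iter k g u = y).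
Proof.
split.
  case/andP => /forallP H1 /forallP H2; split => // u; by apply/reachP.
case=> H1 H2; apply/andP; split; apply/forallP => u //; by apply/reachP.
Qed.

Lemma T1 {E : finType} (Rt : nat -> E -> E -> R) y z f :
  tree Rt y f -> inB Rt (y, z) -> Gset Rt y (upd f y z).
Proof.
case/treeP => H1 H2 H3 Hb; apply/GsetP; split.
  by move=> u; rewrite updE; case: eqVneq => [->|Hu] //; apply: H2.
move=> u; apply: reach_upd (H3 u) => v Hv; by rewrite updE (negbTE Hv).
Qed.

Lemma T2 {E : finType} (Rt : nat -> E -> E -> R) y g :
  Gset Rt y g -> tree Rt y (upd g y y).
Proof.
case/GsetP => H1 H2; apply/treeP; split.
- by rewrite updE eqxx.
- by move=> u Hu; rewrite updE (negbTE Hu).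
- move=> u; apply: reach_upd (H2 u) => v Hv; by rewrite updE (negbTE Hv).
Qed.

Lemma T3 {E : finType} (Rt : nat -> E -> E -> R) x y f :
  tree Rt x f -> inB Rt (x, y) -> Gset Rt y (upd f x y).
Proof.
case/treeP => H1 H2 H3 Hb; apply/GsetP; split.
  by move=> u; rewrite updE; case: eqVneq => [->|Hu] //; apply: H2.
move=> u; have [k Hk] : exists k, iter k (upd f x y) u = x.
  apply: reach_upd (H3 u) => v Hv; by rewrite updE (negbTE Hv).
by exists k.+1; rewrite iterS Hk updE eqxx.
Qed.

Lemma T4 {E : finType} (Rt : nat -> E -> E -> R) x y f :
  tree Rt x f -> inB Rt (x, y) -> ygf (upd f x y) y = x.
Proof.
case/treeP => H1 H2 H3 Hb.
set g := upd f x y.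
have Hgx : g x = y by rewrite /g updE eqxx.
have [b Hbk] : exists k, iter k g y = x.
  apply: reach_upd (H3 y) => v Hv; by rewrite /g updE (negbTE Hv).
rewrite /ygf; case: (pickP (fun u => (g u == y) && fconnect g y u)) => [u /andP[/eqP Hu /reachP [a Ha]] | H] /=.
  rewrite -Hbk -Ha; apply: cycle_uniq.
  - by rewrite iterS Ha Hu.
  - by rewrite iterS Hbk Hgx.
have := H x; rewrite Hgx eqxx /=.
by have -> : fconnect g y x by apply/reachP; exists b.
Qed.

Lemma T5 {E : finType} (Rt : nat -> E -> E -> R) y g :
  Gset Rt y g -> g (ygf g y) = y /\ tree Rt (ygf g y) (upd g (ygf g y) (ygf g y)).
Proof.
case/GsetP => H1 H2.
have [x [Hx Hr]] : exists x, g x = y /\ exists k, iter k g y = x.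
  rewrite /ygf; case: (pickP (fun u => (g u == y) && fconnect g y u)) => [u /andP[/eqP Hu /reachP Hr] | H] /=.
    by exists u.
  exfalso; case: (H2 (g y)) => k Hk.
  have := H (iter k g y).
  rewrite -iterS iterSr Hk eqxx /=.
  by have -> : fconnect g y (iter k g y) by apply: fconnect_iter.
have -> : ygf g y = x.
  rewrite /ygf; case: (pickP (fun u => (g u == y) && fconnect g y u)) => [u /andP[/eqP Hu /reachP [a Ha]] | H] /=.
    case: Hr => b Hb; rewrite -Hb -Ha; apply: cycle_uniq.
    - by rewrite iterS Ha Hu.
    - by rewrite iterS Hb Hx.
  have := H x; rewrite Hx eqxx /=.
  by have -> : fconnect g y x by apply/reachP.
split => //; apply/treeP; split.
- by rewrite updE eqxx.
- by move=> u Hu; rewrite updE (negbTE Hu).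
- move=> u; case: (H2 u) => k1 Hk1; case: Hr => k2 Hk2.
  apply: reach_upd; first by move=> v Hv; rewrite updE (negbTE Hv).
  by exists (k2 + k1)%N; rewrite iterD Hk1.
Qed.

Definition wt {E : finType} (Rt : nat -> E -> E -> R) N x (f : {ffun E -> E}) : R :=
  \big[Rmult/1]_(u | u != x) Rt N u (f u).
Definition Wt {E : finType} (Rt : nat -> E -> E -> R) N x : R :=
  \big[Rplus/0]_(f | tree Rt x f) wt Rt N x f.
Definition Zt {E : finType} (Rt : nat -> E -> E -> R) N y : R :=
  \big[Rplus/0]_(g | Gset Rt y g) \big[Rmult/1]_(u : E) Rt N u (g u).

Lemma prod_upd {E : finType} (Rt : nat -> E -> E -> R) N x y (f : {ffun E -> E}) :
  \big[Rmult/1]_(u : E) Rt N u (upd f x y u) = wt Rt N x f * Rt N x y.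
Proof.
rewrite (bigD1 x) //= updE eqxx Rmult_comm /wt; congr Rmult.
by apply: eq_bigr => u Hu; rewrite updE (negbTE Hu).
Qed.

Lemma Zt_right {E : finType} (Rt : nat -> E -> E -> R) N y :
  Wt Rt N y * \big[Rplus/0]_(z | inB Rt (y, z)) Rt N y z = Zt Rt N y.
Proof.
rewrite /Zt (reindex_onto (fun j : {ffun E -> E} * E => upd j.1 y j.2)
                          (fun g => (upd g y y, g y))) /=; last first.
  by move=> g _; apply/ffunP => v; rewrite !updE; case: eqVneq => [->|].
rewrite /Wt big_distrl /=.
rewrite (eq_bigr (fun f => \big[Rplus/0]_(z | inB Rt (y, z)) (wt Rt N y f * Rt N y z)));
  last by move=> f _; rewrite big_distrr.
rewrite pair_big_dep; apply: eq_big => [[f z]|[f z] _] /=; last by rewrite prod_upd.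
apply/idP/idP.
  case/andP => Ht Hb; apply/andP; split; first exact: T1.
  have Hfy : f y = y by case/treeP: Ht.
  have -> : upd (upd f y z) y y = f.
    by apply/ffunP => v; rewrite !updE; case: eqVneq => [->|].
  by rewrite updE eqxx.
case/andP => HG /eqP [E1 E2]; apply/andP; split.
  by rewrite -E1; apply: T2.
by case/GsetP: HG => H1 _; have := H1 y; rewrite updE eqxx.
Qed.

Lemma Zt_left {E : finType} (Rt : nat -> E -> E -> R) N y :
  \big[Rplus/0]_(x | inB Rt (x, y)) (Wt Rt N x * Rt N x y) = Zt Rt N y.
Proof.
rewrite /Zt (reindex_onto (fun j : E * {ffun E -> E} => upd j.2 j.1 y)
                (fun g => (ygf g y, upd g (ygf g y) (ygf g y)))) /=; last first.
  move=> g HG; have [H1 _] := T5 HG.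
  by apply/ffunP => v; rewrite !updE; case: eqVneq => [->|].
rewrite (eq_bigr (fun x => \big[Rplus/0]_(f | tree Rt x f) (wt Rt N x f * Rt N x y)));
  last by move=> x _; rewrite /Wt big_distrl.
rewrite pair_big_dep; apply: eq_big => [[x f]|[x f] _] /=; last by rewrite prod_upd.
apply/idP/idP.
  case/andP => Hb Ht; apply/andP; split; first exact: T3.
  have Hfx : f x = x by case/treeP: Ht.
  rewrite (T4 Ht Hb).
  have -> : upd (upd f x y) x x = f.
    by apply/ffunP => v; rewrite !updE; case: eqVneq => [->|].
  by rewrite eqxx.
case/andP => HG /eqP [E1 E2].
have [H1 H2] := T5 HG.
apply/andP; split.
  case/GsetP: HG => H3 _; have := H3 (ygf (upd f x y) y); by rewrite H1 E1.
by rewrite E2 E1 in H2.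
Qed.

Lemma tree_balance {E : finType} (Rt : nat -> E -> E -> R) N :
  (forall a b, a != b -> ~~ inB Rt (a, b) -> Rt N a b = 0) ->
  forall y, \big[Rplus/0]_(x | x != y) (Wt Rt N x * Rt N x y)
            = Wt Rt N y * \big[Rplus/0]_(z | z != y) Rt N y z.
Proof.
move=> Hz y.
have -> : \big[Rplus/0]_(x | x != y) (Wt Rt N x * Rt N x y)
        = \big[Rplus/0]_(x | inB Rt (x, y)) (Wt Rt N x * Rt N x y).
  rewrite big_mkcond [RHS]big_mkcond; apply: eq_bigr => x _.
  case Hb: (inB Rt (x, y)); first by rewrite (inB_neq Hb).
  case: (eqVneq x y) => [_|Hne] //=.
  by rewrite (Hz x y Hne) ?Hb ?Rmult_0_r.
have -> : \big[Rplus/0]_(z | z != y) Rt N y z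
        = \big[Rplus/0]_(z | inB Rt (y, z)) Rt N y z.
  rewrite big_mkcond [RHS]big_mkcond; apply: eq_bigr => z _.
  case Hb: (inB Rt (y, z)); first by rewrite eq_sym (inB_neq Hb).
  case: (eqVneq z y) => [_|Hne] //=.
  by rewrite (Hz y z) ?Hb // eq_sym.
by rewrite Zt_left Zt_right.
Qed.

Fixpoint reachk {E : finType} (Rt : nat -> E -> E -> R) (x : E) (k : nat) (u : E) : bool :=
  if k is k'.+1 then [exists v, inB Rt (u, v) && reachk Rt x k' v] else u == x.

Lemma tree_exists {E : finType} (Rt : nat -> E -> E -> R) x :
  (forall u, clos_refl_trans E (edge Rt 1) u x) -> exists f, tree Rt x f.
Proof.
move=> Hirr.
have ex : forall u, exists k, reachk Rt x k u.
  move=> u; elim: (clos_rt_rt1n _ _ _ _ (Hirr u)) => [|a b c Hab _ [k Hk]].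
  - by exists 0%nat => /=.
  - exists k.+1 => /=; apply/existsP; exists b; rewrite Hk andbT.
    case: Hab => Hne Hpos; rewrite /inB /=.
    destruct (Rlt_dec 0 (Rt 1%nat a b)) as [Hl|Hn]; last lra.
    by rewrite andbT; apply/eqP.
pose d u := ex_minn (ex u).
have dP : forall u, reachk Rt x (d u) u by move=> u; rewrite /d; case: ex_minnP.
have dmin : forall u k, reachk Rt x k u -> (d u <= k)%N.
  by move=> u k Hk; rewrite /d; case: ex_minnP => m _ H; apply: H.
pose f := [ffun u => if u == x then x
                     else odflt u [pick v | inB Rt (u, v) && reachk Rt x (d u).-1 v]].
have Hf : forall u, u != x -> inB Rt (u, f u) && (d (f u) < d u)%N.
  move=> u Hu; rewrite /f ffunE (negbTE Hu).
  have Hd : (0 < d u)%N.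
    have := dP u; case E0: (d u) => [|k] //=; by rewrite (negbTE Hu).
  have Hd' : d u = (d u).-1.+1 by lia.
  case: pickP => [v /andP [Hb Hr] | H] /=.
    rewrite Hb /=; have := dmin _ _ Hr; lia.
  exfalso; have := dP u; rewrite {1}Hd' /= => /existsP [v /andP[Hb Hr]].
  by have := H v; rewrite Hb Hr.
have reach : forall n u, (d u <= n)%N -> exists k, iter k f u = x.
  elim=> [|n IH] u Hu.
    have Hd0 : d u = 0%nat by lia.
    by have := dP u; rewrite Hd0 /= => /eqP ->; exists 0%nat.
  case: (eqVneq u x) => [->|Hux]; first by exists 0%nat.
  have /andP [_ Hlt] := Hf u Hux.
  case: (IH (f u)) => [|k Hk]; first by lia.
  by exists k.+1; rewrite iterSr.
exists f; apply/treeP; split.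
- by rewrite /f ffunE eqxx.
- by move=> u Hu; case/andP: (Hf u Hu).
- by move=> u; apply: (reach (d u)).
Qed.

Lemma wt_pos {E : finType} (Rt : nat -> E -> E -> R) N x f :
  (forall e, inB Rt e -> 0 < Rt N e.1 e.2) -> tree Rt x f -> 0 < wt Rt N x f.
Proof.
move=> Hp /treeP [_ H2 _]; rewrite /wt; apply: (big_ind (fun r => 0 < r)).
- lra.
- by move=> a b; apply: Rmult_lt_0_compat.
- by move=> u Hu; apply: (Hp (u, f u)); apply: H2.
Qed.

Lemma Wt_pos {E : finType} (Rt : nat -> E -> E -> R) N x :
  (forall e, inB Rt e -> 0 < Rt N e.1 e.2) -> (exists f, tree Rt x f) -> 0 < Wt Rt N x.
Proof.
move=> Hp [f0 Hf0]; rewrite /Wt (bigD1 f0) //=.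
have := wt_pos Hp Hf0.
have : 0 <= \big[Rplus/0]_(f | tree Rt x f && (f != f0)) wt Rt N x f.
  apply: (big_ind (fun r => 0 <= r)); [lra | move=> a b; lra |].
  by move=> f /andP [Hf _]; left; apply: wt_pos.
move=> H1 H2; exact: Rplus_lt_le_0_compat H2 H1.
Qed.

Definition balance {E : finType} (Q : E -> E -> R) (m : E -> R) :=
  forall y, \big[Rplus/0]_(x | x != y) (m x * Q x y) = m y * \big[Rplus/0]_(z | z != y) Q y z.

Lemma big_Rminus {I : finType} (P : pred I) (a b : I -> R) :
  \big[Rplus/0]_(i | P i) (a i - b i)
  = \big[Rplus/0]_(i | P i) a i - \big[Rplus/0]_(i | P i) b i.
Proof.
apply: (big_rec3 (fun x y z => x = y - z)); first lra.
by move=> i x y z _ ->; lra.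
Qed.

Lemma nonneg_sum_zero {I : finType} (P : pred I) (F : I -> R) j :
  P j -> (forall i, P i -> 0 <= F i) -> \big[Rplus/0]_(i | P i) F i = 0 -> F j = 0.
Proof.
move=> Pj H; rewrite (bigD1 j) //=.
have : 0 <= \big[Rplus/0]_(i | P i && (i != j)) F i.
  apply: (big_ind (fun r => 0 <= r)); [lra | move=> a b; lra |].
  by move=> i /andP [Hi _]; apply: H.
have := H j Pj; lra.
Qed.

Lemma exists_max {E : finType} (h : E -> R) (x1 : E) : exists x0, forall x, h x <= h x0.
Proof.
suff: forall s : seq E, exists x0, forall x, x \in s -> h x <= h x0.
  by case/(_ (enum E)) => x0 H; exists x0 => x; apply: H; rewrite mem_enum.
elim => [|a s [x0 IH]]; first by exists x1.
case: (Rle_lt_dec (h a) (h x0)) => Hle.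
  by exists x0 => x; rewrite in_cons => /orP [/eqP ->|]; [done | exact: IH].
exists a => x; rewrite in_cons => /orP [/eqP ->|Hx]; first lra.
by have := IH x Hx; lra.
Qed.

Lemma propto {E : finType} (Q : E -> E -> R) (mu W : E -> R) (x1 : E) :
  (forall a b, a <> b -> 0 <= Q a b) ->
  (forall a b, clos_refl_trans E (fun a b => a <> b /\ 0 < Q a b) a b) ->
  (forall x, 0 < W x) -> balance Q mu -> balance Q W ->
  exists M, forall x, mu x = M * W x.
Proof.
move=> HQ Hirr HW Bmu BW.
pose h x := mu x / W x.
have Hmu : forall x, mu x = h x * W x.
  by move=> x; rewrite /h; have := HW x; move=> *; field; lra.
have [x0 Hx0] := exists_max h x1.
set M := h x0.
have step : forall v u, h v = M -> u <> v -> 0 < Q u v -> h u = M.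
  move=> v u Hv Huv Hq.
  have HD : \big[Rplus/0]_(x | x != v) ((M - h x) * (W x * Q x v)) = 0.
    rewrite (eq_bigr (fun x => M * (W x * Q x v) - mu x * Q x v)); last first.
      by move=> x _; rewrite Hmu; ring.
    rewrite big_Rminus -big_distrr /= BW Bmu Hmu Hv; ring.
  have H0 : (M - h u) * (W u * Q u v) = 0.
    apply: (nonneg_sum_zero (P := fun x => x != v) _ _ HD).
    - by apply/eqP.
    - move=> x /eqP Hx; apply: Rmult_le_pos.
        by have := Hx0 x; rewrite -/M; lra.
      by apply: Rmult_le_pos; [left; apply: HW | apply: HQ].
  case: (Rmult_integral _ _ H0) => H1; first by lra.
  have := HW u; have := Rmult_lt_0_compat (W u) (Q u v); lra.
have all : forall u, h u = M.
  suff H : forall a c, clos_refl_trans_1n E (fun a b => a <> b /\ 0 < Q a b) a c ->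
      h c = M -> h a = M.
    by move=> u; apply: (H u x0 (clos_rt_rt1n _ _ _ _ (Hirr u x0))).
  move=> a c; elim=> [//|a' b c' [Hab Hq] _ IH] Hc.
  exact: (step b a' (IH Hc) Hab Hq).
by exists M => x; rewrite Hmu all.
Qed.

Definition Kf {E : finType} (Rt : nat -> E -> E -> R) (r : E) (f : {ffun E -> E})
  (p : E * E) (e : E * E) : nat :=
  (nat_of_bool (inB Rt e && (e.1 != r) && (f e.1 == e.2)) + nat_of_bool (e == p))%N.

Lemma K1_reindex {E : finType} (Rt : nat -> E -> E -> R) (r : E) (f : {ffun E -> E})
  (T : Type) (idx : T) (op : Monoid.com_law idx) (F : E * E -> T) :
  tree Rt r f ->
  \big[op/idx]_(e | inB Rt e && ((e.1 != r) && (f e.1 == e.2))) F e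
  = \big[op/idx]_(u | u != r) F (u, f u).
Proof.
move=> /treeP [_ H2 _].
rewrite (reindex_onto (fun u : E => (u, f u)) (fun e => e.1)) /=; last first.
  by move=> [a b] /= /andP [_ /andP [_ /eqP ->]].
apply: eq_bigl => u; rewrite eqxx !andbT.
case: (eqVneq u r) => [->|Hu]; first by rewrite andbF.
by rewrite (H2 u Hu) eqxx.
Qed.

Lemma mono_eq {E : finType} (Rt : nat -> E -> E -> R) N r f p :
  tree Rt r f -> inB Rt p ->
  monomial Rt (Kf Rt r f p) N = wt Rt N r f * Rt N p.1 p.2.
Proof.
move=> Ht Hp; rewrite /monomial.
rewrite (eq_bigr (fun e => Rt N e.1 e.2 ^ (nat_of_bool (inB Rt e && (e.1 != r) && (f e.1 == e.2)))
                        * Rt N e.1 e.2 ^ (nat_of_bool (e == p)))); last first.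
  by move=> e _; rewrite /Kf pow_add.
rewrite big_split /=; congr Rmult.
  transitivity (\big[Rmult/1]_(e | inB Rt e && ((e.1 != r) && (f e.1 == e.2))) Rt N e.1 e.2).
    rewrite [RHS]big_mkcondr; apply: eq_bigr => e He; rewrite He /=.
    by case: ifP => _ /=; rewrite ?Rmult_1_r.
  by rewrite K1_reindex.
rewrite (bigD1 p) //= eqxx big1 /= ?Rmult_1_r //.
by move=> e /andP [_ /negbTE ->].
Qed.

Lemma Kf_class {E : finType} (Rt : nat -> E -> E -> R) r f p :
  tree Rt r f -> inB Rt p ->
  (forall e, ~~ inB Rt e -> Kf Rt r f p e = 0%nat) /\
  (\sum_(e : E * E | inB Rt e) Kf Rt r f p e)%N = #|E|.
Proof.
move=> Ht Hp; split.
  move=> e He; rewrite /Kf (negbTE He) /=.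
  by case: eqVneq => // Ee; rewrite Ee Hp in He.
rewrite big_split /=.
have -> : (\sum_(e | inB Rt e) nat_of_bool (e == p))%N = 1%N.
  rewrite (bigD1 p) //= eqxx big1 //.
  by move=> e /andP [_ /negbTE ->].
have -> : (\sum_(e | inB Rt e) nat_of_bool (inB Rt e && (e.1 != r) && (f e.1 == e.2)))%N
          = (\sum_(e | inB Rt e && ((e.1 != r) && (f e.1 == e.2))) 1)%N.
  rewrite [RHS]big_mkcondr; apply: eq_bigr => e He; rewrite He /=.
  by case: ifP.
rewrite (@K1_reindex _ Rt r f nat 0%N addn (fun _ => 1%N)) //.
have -> : (\sum_(u | u != r) 1)%N = #|E|.-1.
  rewrite -(cardC1 r) -sum1_card; apply: eq_bigl => u; by rewrite !inE.
have : (0 < #|E|)%N by apply/card_gt0P; exists r.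
by move=> H; rewrite addn1 prednK.
Qed.

Lemma In_map {T1 T2 : Type} (F : T1 -> T2) (s : seq T1) y :
  List.In y (map F s) -> exists x, List.In x s /\ y = F x.
Proof.
elim: s => [|a s IH] //= [<-|H]; first by exists a; split; [left|].
by case: (IH H) => x [Hx ->]; exists x; split; [right|].
Qed.

Lemma In_mem {T : eqType} (x : T) (s : seq T) : List.In x s -> x \in s.
Proof.
elim: s => [|a s IH] //= [->|H]; first by rewrite in_cons eqxx.
by rewrite in_cons IH ?orbT.
Qed.

Unset Implicit Arguments.
Set Strict Implicit.

Theorem lemma3p4 (E : finType) (Rt : nat -> E -> E -> R) (mu : nat -> E -> R)
  (Hnonneg : forall N : nat, (0 < N)%N -> forall x y : E, x <> y -> 0 <= Rt N x y)
  (Hirr : forall N : nat, (0 < N)%N -> irreducible Rt N)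
  (Hmu : forall N : nat, (0 < N)%N -> invariant_prob Rt N (mu N))
  (HA1 : forall x y : E, x <> y ->
     (forall N : nat, (0 < N)%N -> Rt N x y = 0) \/
     (forall N : nat, (0 < N)%N -> 0 < Rt N x y))
  (HA2 : forall m : nat, (0 < m)%N ->
     ordered (fun k : E * E -> nat =>
                (forall p, ~~ inB Rt p -> k p = 0%nat) /\
                (\sum_(p : E * E | inB Rt p) k p)%N = m)
             (fun k N => monomial Rt k N)) :
  ordered (fun p : E * E => inB Rt p) (fun p N => mu N p.1 * Rt N p.1 p.2).
Proof.
have posB : forall e, inB Rt e -> forall N, (0 < N)%N -> 0 < Rt N e.1 e.2.
  move=> [x y] He N HN; have Hne := inB_neq He.
  case: (HA1 x y (elimN eqP Hne)) => [H0|Hp]; last by apply: Hp.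
  exfalso; move: He; rewrite /inB /= (H0 1%nat isT).
  by destruct (Rlt_dec 0 0) as [Hl|Hn]; [lra | rewrite andbF].
have zeroB : forall N, (0 < N)%N -> forall a b, a != b -> ~~ inB Rt (a, b) -> Rt N a b = 0.
  move=> N HN a b Hab Hnb.
  case: (HA1 a b (elimN eqP Hab)) => [H0|Hp]; first by apply: H0.
  exfalso; move: Hnb; rewrite /inB /= Hab.
  have := Hp 1%nat isT.
  by destruct (Rlt_dec 0 (Rt 1%nat a b)) as [Hl|Hn].
have treeEx : forall x, exists f, tree Rt x f.
  move=> x; apply: tree_exists => u; exact: (Hirr 1%nat isT u x).
have Wpos : forall N, (0 < N)%N -> forall x, 0 < Wt Rt N x.
  move=> N HN x; apply: Wt_pos (treeEx x) => e He; exact: posB.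
have Mrep : forall N, (0 < N)%N -> forall x1 : E,
    exists M, 0 < M /\ forall x, mu N x = M * Wt Rt N x.
  move=> N HN x1.
  have [H0 [H1 H2]] := Hmu N HN.
  have [M HM] : exists M, forall x, mu N x = M * Wt Rt N x.
    apply: (propto (Q := Rt N) x1).
    - exact: Hnonneg.
    - exact: Hirr.
    - exact: Wpos.
    - exact: H2.
    - exact: tree_balance (zeroB N HN).
  exists M; split => //.
  have HS : M * \big[Rplus/0]_(x : E) Wt Rt N x = 1.
    rewrite big_distrr /= -H1; apply: eq_bigr => x _; by rewrite HM.
  have : 0 < \big[Rplus/0]_(x : E) Wt Rt N x.
    rewrite (bigD1 x1) //=.
    have : 0 <= \big[Rplus/0]_(x | true && (x != x1)) Wt Rt N x.
      apply: (big_ind (fun r => 0 <= r)); [lra | move=> a b; lra |].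
      by move=> x _; left; apply: Wpos.
    move=> H3; exact: Rplus_lt_le_0_compat (Wpos N HN x1) H3.
  move: HS; set S := \big[Rplus/0]_(x : E) Wt Rt N x => HS HSp.
  nra.
split.
  move=> p Hp N HN; have [M [HM0 HM]] := Mrep N HN p.1.
  rewrite HM; apply: Rmult_lt_0_compat; last exact: posB.
  by apply: Rmult_lt_0_compat => //; apply: Wpos.
move=> p q Hp Hq Hpq.
pose la := map (fun f => fun N => monomial Rt (Kf Rt p.1 f p) N) (enum (tree Rt p.1)).
pose lb := map (fun f => fun N => monomial Rt (Kf Rt q.1 f q) N) (enum (tree Rt q.1)).
have Hcl : forall u, List.In u (la ++ lb) -> exists k,
    ((forall e, ~~ inB Rt e -> k e = 0%nat) /\ (\sum_(e | inB Rt e) k e)%N = #|E|) /\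
    u = (fun N => monomial Rt k N).
  move=> u Hu; case: (List.in_app_or _ _ _ Hu) => Hx; case: (In_map Hx) => f [Hf Hu'];
    subst u; move/In_mem: Hf; rewrite mem_enum => Hf.
    by exists (Kf Rt p.1 f p); split => //; apply: Kf_class.
  by exists (Kf Rt q.1 f q); split => //; apply: Kf_class.
have n0 : (0 < #|E|)%N by apply/card_gt0P; exists p.1.
have [HA2pos HA2cmp] := HA2 #|E| n0.
have nonnil : forall x (e : E * E), [seq (fun N => monomial Rt (Kf Rt x f e) N) | f <- enum (tree Rt x)] <> [::].
  move=> x e; case: (treeEx x) => f0 Hf0.
  have : f0 \in enum (tree Rt x) by rewrite mem_enum.
  by case: (enum (tree Rt x)).
case: (@ratio_cv la lb).
- exact: nonnil.
- exact: nonnil.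
- move=> u /Hcl [k [Hk ->]] N HN; exact: HA2pos k Hk N HN.
- move=> u v /Hcl [k [Hk ->]] /Hcl [k' [Hk' ->]].
  case: (classic (k = k')) => [<-|Hne]; last exact: HA2cmp k k' Hk Hk' Hne.
  exists (atan 1); apply: cv_ext_ev (cv_const _) => N HN.
  have := HA2pos k Hk N HN => /= H; congr atan; field; lra.
move=> l Hl; exists l; apply: cv_ext_ev Hl => N HN /=.
have Sa : forall x (e : E * E), inB Rt e ->
    \big[Rplus/0]_(u <- [seq (fun N => monomial Rt (Kf Rt x f e) N) | f <- enum (tree Rt x)]) u N
    = Wt Rt N x * Rt N e.1 e.2.
  move=> x e He; rewrite big_map big_enum /= /Wt big_distrl /=.
  apply: eq_big => [f|f Hf]; first by [].
  exact: mono_eq.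
rewrite /la /lb !Sa //.
have [M [HM0 HM]] := Mrep N HN p.1.
rewrite !HM; congr atan.
have := Wpos N HN q.1; have := posB q Hq N HN => *.
field; repeat split; lra.
Qed.
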